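(* Let $\mathcal{F}$ satisfy the standard conditions, let $A$ be an $\mathcal{F}$-sequence and $\alpha\in\mathbb{R}$. If $x\,|A(x)-\alpha|$ is bounded as $x$ ranges over $\mathbb{N}$, then $\alpha$ is $\mathcal{F}$-computable.
   Context: $\mathbb{N}=\{0,1,2,\dots\}$. $\mathcal{F}$ is a set of functions $\mathbb{N}^n\to\mathbb{N}$; it satisfies the standard conditions if it contains the zero function, the successor, all projections $P^n_i$, addition, multiplication and modified subtraction $x\dot- y=\max(x-y,0)$, and is closed under composition. An $\mathcal{F}$-sequence is $A:\mathbb{N}\to\mathbb{Q}$, $A(x)=\frac{f(x)-g(x)}{h(x)+1}$, with $f,g,h:\mathbb{N}\to\mathbb{N}$ in $\mathcal{F}$. A real number $\alpha$ is $\mathcal{F}$-computable if there is an $\mathcal{F}$-sequence $A$ with $|A(x)-\alpha|\le\frac1{x+1}$ for all $x\in\mathbb{N}$. *)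

(* Defs.v *)
From Stdlib Require Import Reals.
From Stdlib Require Fin.
Open Scope R_scope.

Definition fn (n : nat) : Type := (Fin.t n -> nat) -> nat.

Definition fclass : Type := forall n : nat, fn n -> Prop.

Definition arg0 {n} (v : Fin.t (S n) -> nat) : nat := v Fin.F1.
Definition arg1 {n} (v : Fin.t (S (S n)) -> nat) : nat := v (Fin.FS Fin.F1).

Definition standard_conditions (F : fclass) : Prop :=
  F 1%nat (fun _ => 0%nat) /\
  F 1%nat (fun v => S (arg0 v)) /\
  (forall n (i : Fin.t n), F n (fun v => v i)) /\
  F 2%nat (fun v => (arg0 v + arg1 v)%nat) /\
  F 2%nat (fun v => (arg0 v * arg1 v)%nat) /\
  F 2%nat (fun v => (arg0 v - arg1 v)%nat) (* truncated subtraction *) /\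
  (forall m n (f : fn m) (gs : Fin.t m -> fn n),
      F m f -> (forall i, F n (gs i)) ->
      F n (fun v => f (fun i => gs i v))).

Definition un (f : fn 1) (x : nat) : nat := f (fun _ => x).

Definition Fseq (f g h : fn 1) (x : nat) : R :=
  (INR (un f x) - INR (un g x)) / (INR (un h x) + 1).

Definition F_computable (F : fclass) (alpha : R) : Prop :=
  exists f g h : fn 1, F 1%nat f /\ F 1%nat g /\ F 1%nat h /\
    forall x : nat, Rabs (Fseq f g h x - alpha) <= 1 / (INR x + 1).

(* Main.v *)
Require Import Defs.
From Stdlib Require Import Reals Lra Lia FunctionalExtensionality.
Open Scope R_scope.

Lemma F_ext (F : fclass) n (f g : fn n) : F n f -> (forall v, f v = g v) -> F n g.
Proof. intros H E. replace g with f; auto. apply functional_extensionality; auto. Qed.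

Lemma F_const F : standard_conditions F -> forall c, F 1%nat (fun _ => c).
Proof.
  unfold standard_conditions; intros (H0 & HS & HP & HA & HM & HB & HC) c. induction c as [|c IHc]; [exact H0|].
  pose proof (HC 1%nat 1%nat (fun v => S (arg0 v)) (fun _ => fun _ => c) HS (fun _ => IHc)) as H.
  exact H.
Qed.

Lemma F_bin F (op : fn 2) (a b : fn 1) : standard_conditions F -> F 2%nat op -> F 1%nat a -> F 1%nat b ->
  F 1%nat (fun v => op (fun i => match proj1_sig (Fin.to_nat i) with 0%nat => a | _ => b end v)).
Proof.
  unfold standard_conditions; intros (H0 & HS & HP & HA & HM & HB & HC) Hop Ha Hb.
  exact (HC 2%nat 1%nat op (fun i => match proj1_sig (Fin.to_nat i) with 0%nat => a | _ => b end) Hop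
    (fun i => match proj1_sig (Fin.to_nat i) as k return F 1%nat (match k with 0%nat => a | _ => b end)
              with 0%nat => Ha | _ => Hb end)).
Qed.

Lemma F_p F K : standard_conditions F -> F 1%nat (fun v => (K * S (arg0 v))%nat).
Proof.
  intros Hs. pose proof Hs as Hs'; unfold standard_conditions in Hs'; destruct Hs' as (H0 & HS & HP & HA & HM & HB & HC).
  eapply F_ext. apply (F_bin F _ (fun _ => K) (fun v => S (arg0 v)) Hs HM (F_const F Hs K) HS).
  intros v. reflexivity.
Qed.

Lemma F_comp F (f : fn 1) K : standard_conditions F -> F 1%nat f ->
  F 1%nat (fun v => f (fun _ => (K * S (arg0 v))%nat)).
Proof.
  intros Hs Hf. pose proof Hs as Hs'; unfold standard_conditions in Hs'; destruct Hs' as (H0 & HS & HP & HA & HM & HB & HC).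
  exact (HC 1%nat 1%nat f (fun _ => fun v => (K * S (arg0 v))%nat) Hf (fun _ => F_p F K Hs)).
Qed.

Theorem mainTheorem11 (F : fclass) (f g h : fn 1) (alpha : R) :
  standard_conditions F ->
  F 1%nat f -> F 1%nat g -> F 1%nat h ->
  (exists M : R, forall x : nat, INR x * Rabs (Fseq f g h x - alpha) <= M) ->
  F_computable F alpha.
Proof.
  intros Hs Hf Hg Hh [M HM].
  assert (HK : exists K : nat, M <= INR K).
  { destruct (INR_unbounded M) as [K HK]. exists K. lra. }
  destruct HK as [K HK].
  exists (fun v => f (fun _ => (S K * S (arg0 v))%nat)),
         (fun v => g (fun _ => (S K * S (arg0 v))%nat)),
         (fun v => h (fun _ => (S K * S (arg0 v))%nat)).
  split; [apply F_comp; auto|]. split; [apply F_comp; auto|]. split; [apply F_comp; auto|].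
  intros x. specialize (HM (S K * S x)%nat).
  change (Fseq (fun v => f (fun _ => (S K * S (arg0 v))%nat))
     (fun v => g (fun _ => (S K * S (arg0 v))%nat))
     (fun v => h (fun _ => (S K * S (arg0 v))%nat)) x) with (Fseq f g h (S K * S x)%nat).
  set (e := Rabs _) in *.
  assert (He : 0 <= e) by apply Rabs_pos.
  rewrite mult_INR, !S_INR in HM.
  pose proof (pos_INR K). pose proof (pos_INR x).
  apply Rmult_le_reg_l with ((INR K + 1) * (INR x + 1)). nra.
  replace ((INR K + 1) * (INR x + 1) * (1 / (INR x + 1))) with (INR K + 1) by (field; lra).
  lra.
Qed.
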